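(* Let $d\ge2$ and let $\mathcal{G}$ be a stochastic subgroup of $\mathrm{O}(d^2)$. Then there exists a qplex $Q$ such that $\mathcal{G}\subseteq\mathcal{G}(Q)$ (in particular $RQ=Q$ for all $R\in\mathcal{G}$).
   Context: Fix an integer $d\ge 2$. $\mathrm{O}(d^2)$ is the group of real orthogonal $d^2\times d^2$ matrices. $\langle\cdot,\cdot\rangle$ is the standard inner product on $\mathbb{R}^{d^2}$, $\|\cdot\|$ the Euclidean norm. $\Delta=\{p\in\mathbb{R}^{d^2}: p(i)\ge0,\ \sum_ip(i)=1\}$; $H=\{u\in\mathbb{R}^{d^2}:\sum_i u(i)=1\}$; $c=(1/d^2,\dots,1/d^2)$. For $A\subseteq H$ the polar is $A^*=\{u\in H:\langle u,v\rangle\ge\frac{1}{d(d+1)}\ \forall v\in A\}$. Out-ball $B_{\rm o}=\{u\in H:\|u-c\|\le r_{\rm o}\}$, $r_{\rm o}^2=\frac{d-1}{d^2(d+1)}$. A qplex is a set $Q\subseteq\Delta\cap B_{\rm o}$ with $Q^*=Q$. A measurement is an array $r(i|j)\ge0$, $i,j\in\{1,\dots,d^2\}$, with $\sum_i r(i|j)=1$ for every $j$; for $q\in Q$, $q_r(i)=\sum_j[(d+1)q(j)-\frac1d]r(i|j)$; it is $Q$-preserving if $\{q_r:q\in Q\}=Q$; its stretched measurement matrix is $R_{ij}=(d+1)r(i|j)-\frac1d\sum_k r(i|k)$. The preservation group $\mathcal{G}(Q)$ is the set of stretched measurement matrices of $Q$-preserving measurements. A subgroup $\mathcal{G}\subseteq\mathrm{O}(d^2)$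 is stochastic if every $R\in\mathcal{G}$ satisfies $R_{ij}\ge-\frac1d$ for all $i,j$ and $Rc=c$. *)

(* Defs.v *)
From mathcomp Require Import all_boot.
From Stdlib Require Import Reals.
Set Implicit Arguments. Unset Strict Implicit. Unset Printing Implicit Defensive.
Local Open Scope R_scope.

Section QplexDefs.
Variable d : nat.

Definition N : nat := muln d d.
Definition dR : R := INR d.

Definition vec := 'I_N -> R.
Definition mat := 'I_N -> 'I_N -> R.

Definition Rsum (F : 'I_N -> R) : R := \big[Rplus/0]_(i < N) F i.

Definition inner (u v : vec) : R := Rsum (fun i => u i * v i).
Definition sqnorm (u : vec) : R := inner u u.

Definition inDelta (p : vec) : Prop := (forall i, 0 <= p i) /\ Rsum p = 1.
Definition inH (u : vec) : Prop := Rsum u = 1.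

Definition cvec : vec := fun _ => 1 / (dR * dR).

Definition polar (A : vec -> Prop) : vec -> Prop :=
  fun u => inH u /\ forall v, A v -> inner u v >= 1 / (dR * (dR + 1)).

Definition ro2 : R := (dR - 1) / (dR * dR * (dR + 1)).
Definition inBo (u : vec) : Prop :=
  inH u /\ sqnorm (fun i => u i - cvec i) <= ro2.

Definition qplex (Q : vec -> Prop) : Prop :=
  (forall u, Q u -> inDelta u /\ inBo u) /\
  (forall u, polar Q u <-> Q u).

(* measurements r(i|j) = r i j *)
Definition measurement (r : mat) : Prop :=
  (forall i j, 0 <= r i j) /\ (forall j, Rsum (fun i => r i j) = 1).

Definition q_r (r : mat) (q : vec) : vec :=
  fun i => Rsum (fun j => ((dR + 1) * q j - 1 / dR) * r i j).

Definition Q_preserving (Q : vec -> Prop) (r : mat) : Prop :=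
  forall p, (exists q, Q q /\ forall i, p i = q_r r q i) <-> Q p.

Definition stretched (r : mat) : mat :=
  fun i j => (dR + 1) * r i j - 1 / dR * Rsum (fun k => r i k).

Definition in_presgroup (Q : vec -> Prop) (S : mat) : Prop :=
  exists r, measurement r /\ Q_preserving Q r /\
            forall i j, S i j = stretched r i j.

Definition mmul (A B : mat) : mat :=
  fun i j => Rsum (fun k => A i k * B k j).
Definition idm : mat := fun i j => if i == j then 1 else 0.
Definition mapply (A : mat) (v : vec) : vec :=
  fun i => Rsum (fun j => A i j * v j).
Definition mat_eq (A B : mat) : Prop := forall i j, A i j = B i j.

Definition orthogonal (A : mat) : Prop :=
  forall i j, Rsum (fun k => A k i * A k j) = idm i j.

Definition subgroup_O (G : mat -> Prop) : Prop :=
  (forall A, G A -> orthogonal A) /\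
  G idm /\
  (forall A B, G A -> G B -> G (mmul A B)) /\
  (forall A, G A -> exists B, G B /\ mat_eq (mmul B A) idm).

Definition stochastic (G : mat -> Prop) : Prop :=
  forall A, G A ->
    (forall i j, A i j >= - (1 / dR)) /\
    (forall i, mapply A cvec i = cvec i).

End QplexDefs.

(* Main.v *)
Require Import Defs.
From HB Require Import structures.
From mathcomp Require Import all_boot.
From mathcomp Require Import classical_sets.
From Stdlib Require Import Reals Lra FunctionalExtensionality Classical.
Set Implicit Arguments. Unset Strict Implicit. Unset Printing Implicit Defensive.
Local Open Scope R_scope.

Lemma Rplus_assoc' : associative Rplus. Proof. move=> *; ring. Qed.
HB.instance Definition _ := Monoid.isComLaw.Build R 0 Rplus Rplus_assoc' Rplus_comm Rplus_0_l.


Lemma Rsum_ext d (F G : 'I_(Defs.N d) -> R) : (forall i, F i = G i) -> Rsum F = Rsum G.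
Proof. by move=> h; apply: eq_bigr. Qed.

Lemma Rsum_add d (F G : 'I_(Defs.N d) -> R) : Rsum (fun i => F i + G i) = Rsum F + Rsum G.
Proof. by rewrite /Rsum big_split. Qed.

Lemma Rsum_scal d a (F : 'I_(Defs.N d) -> R) : Rsum (fun i => a * F i) = a * Rsum F.
Proof. rewrite /Rsum; elim/big_rec2: _ => [|i x y _ ->]; ring. Qed.

Lemma Rsum_scalr d a (F : 'I_(Defs.N d) -> R) : Rsum (fun i => F i * a) = Rsum F * a.
Proof. rewrite /Rsum; elim/big_rec2: _ => [|i x y _ ->]; ring. Qed.

Lemma Rsum_opp d (F : 'I_(Defs.N d) -> R) : Rsum (fun i => - F i) = - Rsum F.
Proof. rewrite /Rsum; elim/big_rec2: _ => [|i x y _ ->]; ring. Qed.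

Lemma Rsum_sub d (F G : 'I_(Defs.N d) -> R) : Rsum (fun i => F i - G i) = Rsum F - Rsum G.
Proof. rewrite /Rminus -Rsum_opp -Rsum_add; done. Qed.

Lemma iter_Rplus n a : iter n (Rplus a) 0 = INR n * a.
Proof. elim: n => [|n IH]; first (simpl; ring). rewrite S_INR /= IH; ring. Qed.

Lemma INR_N d : INR (Defs.N d) = dR d * dR d.
Proof. by rewrite /Defs.N /dR -multE mult_INR. Qed.

Lemma Rsum_const d a : Rsum (fun _ : 'I_(Defs.N d) => a) = dR d * dR d * a.
Proof. by rewrite /Rsum big_const_ord iter_Rplus INR_N. Qed.

Lemma Rsum_delta d (k : 'I_(Defs.N d)) a : Rsum (fun j => if j == k then a else 0) = a.
Proof.
rewrite /Rsum (bigD1 k) //= eqxx big1 => [|j /negbTE -> //]; ring.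
Qed.

Lemma Rsum_swap d (F : 'I_(Defs.N d) -> 'I_(Defs.N d) -> R) :
  Rsum (fun i => Rsum (fun j => F i j)) = Rsum (fun j => Rsum (fun i => F i j)).
Proof. by rewrite /Rsum exchange_big. Qed.

Lemma Rsum_ge0 d (F : 'I_(Defs.N d) -> R) : (forall i, 0 <= F i) -> 0 <= Rsum F.
Proof. move=> h; rewrite /Rsum; elim/big_rec: _ => [|i x _ hx]; [lra|]. have := h i; lra. Qed.

Lemma Rsum_le d (F G : 'I_(Defs.N d) -> R) : (forall i, F i <= G i) -> Rsum F <= Rsum G.
Proof.
move=> h; have : 0 <= Rsum (fun i => G i - F i) by apply: Rsum_ge0 => i; have := h i; lra.
rewrite Rsum_sub; lra.
Qed.

Lemma dR_ge2 (d : nat) : (2 <= d)%nat -> 2 <= dR d.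
Proof. move=> h; rewrite /dR; apply: (le_INR 2); exact/leP. Qed.

Lemma inner_sym d (u v : vec d) : inner u v = inner v u.
Proof. apply: Rsum_ext => i; ring. Qed.

Lemma inner_ext d (u u' v v' : vec d) : (forall i, u i = u' i) -> (forall i, v i = v' i) ->
  inner u v = inner u' v'.
Proof. move=> h1 h2; apply: Rsum_ext => i; by rewrite h1 h2. Qed.

Lemma inner_lin d a b (x y v : vec d) :
  inner (fun i => a * x i + b * y i) v = a * inner x v + b * inner y v.
Proof.
rewrite /inner -!Rsum_scal -Rsum_add; apply: Rsum_ext => i; ring.
Qed.

Lemma inner_c d (v : vec d) : inner (@cvec d) v = Rsum v / (dR d * dR d).
Proof. rewrite /inner /cvec /Rdiv -Rsum_scalr; apply: Rsum_ext => i; ring. Qed.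

Lemma mapply_lin d (A : mat d) a b (x y : vec d) i :
  mapply A (fun j => a * x j + b * y j) i = a * mapply A x i + b * mapply A y i.
Proof. rewrite /mapply -!Rsum_scal -Rsum_add; apply: Rsum_ext => j; ring. Qed.

Lemma mapply_mmul d (A B : mat d) (x : vec d) i :
  mapply (mmul A B) x i = mapply A (mapply B x) i.
Proof.
rewrite /mapply /mmul.
transitivity (Rsum (fun j => Rsum (fun k => A i k * B k j * x j))).
  by apply: Rsum_ext => j; rewrite -Rsum_scalr.
rewrite Rsum_swap; apply: Rsum_ext => k; rewrite -Rsum_scal; apply: Rsum_ext => j; ring.
Qed.

Lemma mapply_idm d (x : vec d) i : mapply (@idm d) x i = x i.
Proof.
rewrite /mapply /idm -(Rsum_delta i (x i)); apply: Rsum_ext => j.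
rewrite eq_sym; case: (j == i) /eqP => [->|_]; ring.
Qed.

Lemma orth_inner d (A : mat d) (x y : vec d) : orthogonal A ->
  inner (mapply A x) (mapply A y) = inner x y.
Proof.
move=> hA; rewrite /inner /mapply.
transitivity (Rsum (fun i => Rsum (fun j => Rsum (fun l => A i j * x j * (A i l * y l))))).
  apply: Rsum_ext => i; rewrite -Rsum_scalr; apply: Rsum_ext => j; by rewrite -Rsum_scal.
rewrite Rsum_swap; apply: Rsum_ext => j.
rewrite Rsum_swap.
transitivity (Rsum (fun l => x j * y l * idm j l)).
  apply: Rsum_ext => l; rewrite -hA -Rsum_scal; apply: Rsum_ext => i; ring.
rewrite /idm -(Rsum_delta j (x j * y j)); apply: Rsum_ext => l.
rewrite eq_sym; case: (l == j) /eqP => [->|_]; ring.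
Qed.

Definition evec d (j : 'I_(Defs.N d)) : vec d := fun l => if l == j then 1 else 0.

Lemma mapply_evec d (A : mat d) j i : mapply A (evec j) i = A i j.
Proof.
rewrite /mapply /evec -(Rsum_delta j (A i j)); apply: Rsum_ext => l.
case: (l == j) /eqP => [->|_]; ring.
Qed.

Lemma inner_evec d (x : vec d) j : inner (evec j) x = x j.
Proof.
rewrite /inner /evec -(Rsum_delta j (x j)); apply: Rsum_ext => l.
case: (l == j) /eqP => [->|_]; ring.
Qed.

Lemma mapply_ext d (A : mat d) (x y : vec d) i : (forall j, x j = y j) -> mapply A x i = mapply A y i.
Proof. move=> h; apply: Rsum_ext => j; by rewrite h. Qed.

Lemma dRpos (d : nat) : (2 <= d)%nat -> 0 < dR d.
Proof. move=> /dR_ge2; lra. Qed.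

Lemma colsum d (hd : (2 <= d)%nat) (G : mat d -> Prop) (hG : subgroup_O G) (hst : stochastic G)
  R j : G R -> Rsum (fun i => R i j) = 1.
Proof.
move=> hR; have hO := hG.1 R hR; have [_ hc] := hst R hR.
have D := dRpos hd.
have := orth_inner (evec j) (@cvec d) hO.
rewrite inner_evec (inner_ext (v' := @cvec d) (fun i => mapply_evec R j i) hc).
rewrite inner_sym inner_c /cvec => h.
have : Rsum (fun i => R i j) = 1 / (dR d * dR d) * (dR d * dR d).
  rewrite -h; field; lra.
move=> ->; field; lra.
Qed.

Lemma rowsum d (hd : (2 <= d)%nat) (G : mat d -> Prop) (hst : stochastic G)
  R i : G R -> Rsum (fun j => R i j) = 1.
Proof.
move=> hR; have [_ hc] := hst R hR; have := hc i.
have D := dRpos hd.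
rewrite /mapply /cvec Rsum_scalr => h.
have : Rsum (fun j => R i j) = Rsum (fun j : 'I_(Defs.N d) => R i j) * (1 / (dR d * dR d)) * (dR d * dR d)
  by field; lra.
rewrite h => ->; field; lra.
Qed.

Lemma sum_mapply d (hd : (2 <= d)%nat) (G : mat d -> Prop) (hG : subgroup_O G) (hst : stochastic G)
  R (x : vec d) : G R -> Rsum (mapply R x) = Rsum x.
Proof.
move=> hR; rewrite /mapply Rsum_swap; apply: Rsum_ext => j.
rewrite Rsum_scalr (colsum hd hG hst j hR); ring.
Qed.

Lemma Ginv d (G : mat d -> Prop) (hG : subgroup_O G) R : G R ->
  exists B, G B /\ (forall x i, mapply B (mapply R x) i = x i) /\
                  (forall x i, mapply R (mapply B x) i = x i).
Proof.
move=> hR; have [_ [_ [_ hinv]]] := hG.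
have [B [hB hBR]] := hinv R hR; have [C [hC hCB]] := hinv B hB.
have BR x i : mapply B (mapply R x) i = x i.
  rewrite -mapply_mmul -(mapply_idm x i); apply: Rsum_ext => j; by rewrite hBR.
have CB x i : mapply C (mapply B x) i = x i.
  rewrite -mapply_mmul -(mapply_idm x i); apply: Rsum_ext => j; by rewrite hCB.
exists B; split => //; split => // x i.
transitivity (mapply C (mapply B (mapply R (mapply B x))) i); first by rewrite CB.
have -> : mapply C (mapply B (mapply R (mapply B x))) i = mapply C (mapply B x) i
  by apply: mapply_ext => j; exact: BR.
exact: CB.
Qed.

Definition al d := 1 / (dR d * (dR d + 1)).
Definition ri2 d := 1 / (dR d * dR d * (dR d * dR d - 1)).
Definition vtx d (k : 'I_(Defs.N d)) : vec d := fun j => if j == k then 1 / dR d else al d.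
Definition subc d (x : vec d) : vec d := fun i => x i - cvec i.
Definition inBi d (b : vec d) := inH b /\ sqnorm (subc b) <= ri2 d.

Lemma sqnorm_ge0 d (x : vec d) : 0 <= sqnorm x.
Proof. apply: Rsum_ge0 => i; nra. Qed.


Lemma Rsum_c d (hd : (2 <= d)%nat) : Rsum (@cvec d) = 1.
Proof. have D := dRpos hd. rewrite /cvec Rsum_const; field; lra. Qed.

Lemma inner_subc d (hd : (2 <= d)%nat) (x y : vec d) : inH x -> inH y ->
  inner (subc x) (subc y) = inner x y - 1 / (dR d * dR d).
Proof.
move=> hx hy; have D := dRpos hd.
have e : inner (subc x) (subc y) =
   inner x y - inner (@cvec d) y - inner (@cvec d) x + inner (@cvec d) (@cvec d).
  rewrite /inner /subc -!Rsum_sub -Rsum_add; apply: Rsum_ext => i; ring.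
rewrite e !inner_c hx hy (Rsum_c hd); field; lra.
Qed.

Lemma CS_lam d (a b : vec d) l : 0 < l ->
  inner a b >= - (l * l * sqnorm a + sqnorm b) / (2 * l).
Proof.
move=> hl.
have h : 0 <= l * l * sqnorm a + 2 * l * inner a b + sqnorm b.
  have -> : l * l * sqnorm a + 2 * l * inner a b + sqnorm b =
            sqnorm (fun i => l * a i + b i).
    rewrite /sqnorm /inner -!Rsum_scal -!Rsum_add; apply: Rsum_ext => i; ring.
  exact: sqnorm_ge0.
apply: Rle_ge; apply: (Rmult_le_reg_r (2 * l)); first lra.
have -> : - (l * l * sqnorm a + sqnorm b) / (2 * l) * (2 * l) = - (l * l * sqnorm a + sqnorm b)
  by field; lra.
nra.
Qed.

Lemma Rsum_adelta d (k : 'I_(Defs.N d)) a b :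
  Rsum (fun j => a + (if j == k then b else 0)) = dR d * dR d * a + b.
Proof. by rewrite Rsum_add Rsum_const Rsum_delta. Qed.

Lemma vtx_eq d (k : 'I_(Defs.N d)) j :
  vtx k j = al d + (if j == k then 1 / dR d - al d else 0).
Proof. rewrite /vtx; case: (j == k); ring. Qed.

Lemma vtx_sum d (hd : (2 <= d)%nat) k : Rsum (@vtx d k) = 1.
Proof.
have D := dRpos hd.
rewrite (Rsum_ext (vtx_eq k)) Rsum_adelta /al; field; lra.
Qed.

Lemma inner_vtx d (p : vec d) k :
  inner p (vtx k) = al d * Rsum p + p k * (1 / dR d - al d).
Proof.
rewrite /inner.
transitivity (Rsum (fun j => al d * p j + (if j == k then p k * (1 / dR d - al d) else 0))).
  apply: Rsum_ext => j; rewrite /vtx; case: (j == k) /eqP => [->|_]; ring.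
by rewrite Rsum_add Rsum_scal Rsum_delta.
Qed.

Lemma sqnorm_vtx d (k : 'I_(Defs.N d)) :
  sqnorm (vtx k) = dR d * dR d * (al d * al d) + (1 / dR d * (1 / dR d) - al d * al d).
Proof.
rewrite /sqnorm /inner -(Rsum_adelta k); apply: Rsum_ext => j.
rewrite /vtx; case: (j == k); ring.
Qed.

Lemma vtx_Delta_ge d (hd : (2 <= d)%nat) (p : vec d) k : inDelta p -> inner p (vtx k) >= al d.
Proof.
move=> [hp hs]; have D := dR_ge2 hd.
rewrite inner_vtx hs; have := hp k.
have : 1 / dR d - al d >= 0.
  rewrite /al; apply: Rle_ge.
  have -> : 1 / dR d - 1 / (dR d * (dR d + 1)) = 1 / (dR d + 1) by field; lra.
  apply: Rlt_le; apply: Rdiv_lt_0_compat; lra.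
nra.
Qed.

Lemma Rsum_ge_term d (F : 'I_(Defs.N d) -> R) j : (forall i, 0 <= F i) -> F j <= Rsum F.
Proof.
move=> h; rewrite /Rsum (bigD1 j) //=.
have : 0 <= \big[Rplus/0]_(i < Defs.N d | i != j) F i.
  elim/big_ind: _ => //; [lra| move=> x y; lra].
set s := \big[_/_]_(i < _ | _) _. move=> hs. have e : forall a b, Rle a (Rplus a b) \/ ~ Rle 0 b by move=> a b; lra. case: (e (F j) s) => //.
Qed.

Lemma coord_bound d (w : vec d) a j : Rsum w = 0 ->
  (w j + a) * (w j + a) <= sqnorm w + dR d * dR d * (a * a).
Proof.
move=> hw.
have -> : sqnorm w + dR d * dR d * (a * a) = Rsum (fun k => (w k + a) * (w k + a)).
  have -> : Rsum (fun k => (w k + a) * (w k + a)) =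
     Rsum (fun k => w k * w k + (2 * a * w k + a * a)).
    by apply: Rsum_ext => k; ring.
  rewrite Rsum_add Rsum_add Rsum_scal Rsum_const hw /sqnorm /inner; ring.
apply: (Rsum_ge_term (F := fun k => (w k + a) * (w k + a))) => i; exact: Rle_0_sqr.
Qed.

Lemma subc_sum d (hd : (2 <= d)%nat) (x : vec d) : inH x -> Rsum (subc x) = 0.
Proof. move=> hx; rewrite /subc Rsum_sub hx Rsum_c //; ring. Qed.

Lemma Bi_Delta d (hd : (2 <= d)%nat) (b : vec d) : inBi b -> inDelta b.
Proof.
move=> [hb hs]; split => // j.
have D := dR_ge2 hd.
set n := dR d * dR d.
have hn : 4 <= n by rewrite /n; nra.
set w := subc b.
have hw := subc_sum hd hb.
have h := coord_bound (w j / (n - 1)) j hw; fold n in h.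
set s := sqnorm w in h hs.
have h2 : (w j * n) * (w j * n) <= s * ((n - 1) * (n - 1)) + n * (w j * w j).
  have e1 : (w j * n) * (w j * n) = (w j + w j / (n - 1)) * (w j + w j / (n - 1)) * ((n-1)*(n-1))
    by field; lra.
  have e2 : s * ((n - 1) * (n - 1)) + n * (w j * w j) =
            (s + n * (w j / (n - 1) * (w j / (n - 1)))) * ((n-1)*(n-1)) by field; lra.
  rewrite e1 e2; apply: Rmult_le_compat_r; first nra.
  by move: h; rewrite -/w.
have h3 : w j * w j * n <= s * (n - 1).
  apply: (Rmult_le_reg_r (n - 1)); first lra.
  nra.
have hs' : s * (n - 1) <= 1 / n.
  have : ri2 d * (n - 1) = 1 / n by rewrite /ri2 -/n; field; lra.
  move=> <-; apply: Rmult_le_compat_r; lra.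
have h4 : w j * w j <= 1 / n * (1 / n).
  apply: (Rmult_le_reg_r n); first lra.
  have -> : 1 / n * (1 / n) * n = 1 / n by field; lra.
  lra.
have hwj : w j = b j - 1 / n by rewrite /w /subc /cvec.
have hn0 : 0 < 1 / n by apply: Rdiv_lt_0_compat; lra.
nra.
Qed.

Lemma ri2_ro2 d (hd : (2 <= d)%nat) : ri2 d <= ro2 d.
Proof.
have D := dR_ge2 hd.
have D2 : dR d * dR d - 1 <> 0 by move=> E; nra.
have D3 : dR d * dR d <> 0 by move=> E; nra.
have -> : ri2 d = ro2 d / ((dR d - 1) * (dR d - 1)) by rewrite /ri2 /ro2; field; repeat split; lra.
have hr : 0 <= ro2 d.
  rewrite /ro2; apply: Rmult_le_pos; [lra|]. apply: Rlt_le; apply: Rinv_0_lt_compat. nra.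
have -> : ro2 d / ((dR d - 1) * (dR d - 1)) = ro2 d * / ((dR d - 1) * (dR d - 1)) by [].
have : / ((dR d - 1) * (dR d - 1)) <= 1.
  rewrite -Rinv_1; apply: Rinv_le_contravar; nra.
nra.
Qed.

Lemma subc_mapply d (hd : (2 <= d)%nat) (G : mat d -> Prop) (hst : stochastic G) R (x : vec d) :
  G R -> forall i, subc (mapply R x) i = mapply R (subc x) i.
Proof.
move=> hR i; have [_ hc] := hst R hR.
rewrite /subc.
have -> : mapply R (fun i0 => x i0 - cvec i0) i = mapply R (fun j => 1 * x j + (-1) * cvec j) i.
  by apply: mapply_ext => j; ring.
rewrite mapply_lin hc; ring.
Qed.

Lemma G_H_norm d (hd : (2 <= d)%nat) (G : mat d -> Prop) (hG : subgroup_O G) (hst : stochastic G)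
  R (x : vec d) : G R -> inH x ->
  inH (mapply R x) /\ sqnorm (subc (mapply R x)) = sqnorm (subc x).
Proof.
move=> hR hx; split; first by rewrite /inH (sum_mapply hd hG hst x hR).
rewrite /sqnorm (inner_ext (subc_mapply hd hst x hR) (subc_mapply hd hst x hR)).
exact: orth_inner (hG.1 R hR).
Qed.

Lemma Gvtx_Delta d (hd : (2 <= d)%nat) (G : mat d -> Prop) (hG : subgroup_O G) (hst : stochastic G) R k :
  G R -> inDelta (mapply R (vtx k)).
Proof.
move=> hR; have D := dR_ge2 hd.
split.
  move=> i.
  have -> : mapply R (vtx k) i = inner (fun j => R i j) (vtx k) by [].
  rewrite inner_vtx (rowsum hd hst i hR).
  have [hge _] := hst R hR; have := hge i k.
  have -> : al d * 1 + R i k * (1 / dR d - al d) = (1 + dR d * R i k) / (dR d * (dR d + 1))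
    by rewrite /al; field; lra.
  move=> h; apply: Rmult_le_pos; last by apply: Rlt_le; apply: Rinv_0_lt_compat; nra.
  have : dR d * R i k >= dR d * (- (1 / dR d)) by apply: Rle_ge; apply: Rmult_le_compat_l; lra.
  have -> : dR d * (- (1 / dR d)) = -1 by field; lra.
  lra.
rewrite (sum_mapply hd hG hst _ hR); exact: vtx_sum.
Qed.

Lemma vtx_Bo d (hd : (2 <= d)%nat) k : sqnorm (subc (@vtx d k)) = ro2 d.
Proof.
have D := dR_ge2 hd.
rewrite /sqnorm inner_subc //; try exact: vtx_sum.
rewrite -/(sqnorm _) sqnorm_vtx /ro2 /al; field; lra.
Qed.

Lemma Gvtx_Bo d (hd : (2 <= d)%nat) (G : mat d -> Prop) (hG : subgroup_O G) (hst : stochastic G) R k :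
  G R -> inBo (mapply R (vtx k)).
Proof.
move=> hR; have [h1 h2] := G_H_norm hd hG hst hR (vtx_sum hd k).
split => //; rewrite h2 vtx_Bo //; lra.
Qed.

Definition M0 d (G : mat d -> Prop) : vec d -> Prop :=
  fun u => inBi u \/ exists R k, G R /\ u = mapply R (vtx k).

Definition good d (G : mat d -> Prop) (K : vec d -> Prop) :=
  (forall u, K u -> inDelta u /\ inBo u) /\
  (forall u v, K u -> K v -> inner u v >= al d) /\
  (forall R u, G R -> K u -> K (mapply R u)) /\
  (forall u, M0 G u -> K u).

Definition gam d := 1 / (dR d * dR d) - al d.

Lemma consts d (hd : (2 <= d)%nat) :
  0 < gam d /\ 0 < ro2 d /\ 0 < ri2 d /\ gam d * gam d = ro2 d * ri2 d /\
  (dR d - 1) * (dR d - 1) * ri2 d = ro2 d /\ ro2 d / (dR d - 1) = gam d /\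
  1 / (dR d * dR d) - ri2 d >= al d /\ 0 < al d /\ al d < 1 / (dR d * dR d) /\
  0 < 1 / dR d - al d.
Proof.
have D := dR_ge2 hd.
have D2 : dR d * dR d - 1 <> 0 by move=> E; nra.
have D3 : dR d * dR d <> 0 by move=> E; nra.
have D4 : 0 < dR d * dR d - 1 by nra.
have D5 : 0 < dR d * dR d * (dR d * dR d - 1) by nra.
have eg : gam d = 1 / (dR d * dR d * (dR d + 1)) by rewrite /gam /al; field; lra.
have pos : forall x, 0 < x -> 0 < 1 / x by move=> x hx; apply: Rdiv_lt_0_compat; lra.
split; first by rewrite eg; apply: pos; nra.
split; first by rewrite /ro2; apply: Rdiv_lt_0_compat; nra.
split; first by rewrite /ri2; apply: pos.
split; first by rewrite eg /ro2 /ri2; field; repeat split; lra.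
split; first by rewrite /ro2 /ri2; field; repeat split; lra.
split; first by rewrite eg /ro2; field; repeat split; lra.
split.
  suff : 0 <= 1 / (dR d * dR d) - ri2 d - al d by lra.
  have -> : 1 / (dR d * dR d) - ri2 d - al d = (dR d - 2) / (dR d * dR d * (dR d * dR d - 1))
    by rewrite /ri2 /al; field; repeat split; lra.
  apply: Rmult_le_pos; first lra.
  by apply: Rlt_le; apply: Rinv_0_lt_compat.
split; first by rewrite /al; apply: pos; nra.
split.
  have : 0 < gam d by rewrite eg; apply: pos; nra.
  rewrite /gam; lra.
have -> : 1 / dR d - al d = 1 / (dR d + 1) by rewrite /al; field; lra.
apply: pos; lra.
Qed.

Lemma inner_shift d (G : mat d -> Prop) (hG : subgroup_O G) R : G R ->
  exists B, G B /\ forall x y : vec d, inner (mapply R x) y = inner x (mapply B y).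
Proof.
move=> hR; have [B [hB [BR RB]]] := Ginv hG hR.
exists B; split => // x y.
rewrite -(orth_inner x (mapply B y) (hG.1 R hR)).
by apply: inner_ext => // i; rewrite RB.
Qed.

Lemma mapply_mmul_f d (A B : mat d) (x : vec d) :
  mapply (mmul A B) x = mapply A (mapply B x).
Proof. apply: functional_extensionality => i; exact: mapply_mmul. Qed.

Lemma inner_c_sub d (hd : (2 <= d)%nat) (x y : vec d) : inH x -> inH y ->
  inner x y = 1 / (dR d * dR d) + inner (subc x) (subc y).
Proof. move=> hx hy; rewrite inner_subc //; ring. Qed.

Lemma good_M0 d (hd : (2 <= d)%nat) (G : mat d -> Prop) (hG : subgroup_O G) (hst : stochastic G) :
  good G (M0 G).
Proof.
have [hg [hro [hri [hgg [hlr [hrg [h1r [hal [hal2 hal3]]]]]]]]] := consts hd.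
have D := dR_ge2 hd.
have BiBo : forall b : vec d, inBi b -> inBo b.
  move=> b [hb hs]; split => //; change (sqnorm (subc b) <= ro2 d); have := ri2_ro2 hd; lra.
have BiH : forall b : vec d, inBi b -> inH b by move=> b [].
have VH : forall R k, G R -> inH (mapply R (@vtx d k)) by move=> R k hR; exact: (Gvtx_Delta hd hG hst k hR).2.
have BiV : forall b R k, inBi b -> G R -> inner b (mapply R (@vtx d k)) >= al d.
  move=> b R k hb hR; rewrite (inner_c_sub hd (BiH _ hb) (VH R k hR)).
  have := CS_lam (subc b) (subc (mapply R (vtx k))) (l := dR d - 1) ltac:(lra).
  have [_ e] := G_H_norm hd hG hst hR (vtx_sum hd k).
  rewrite e vtx_Bo //.
  have hb2 := hb.2.
  have : (dR d - 1) * (dR d - 1) * sqnorm (subc b) <= ro2 d.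
    rewrite -hlr; apply: Rmult_le_compat_l; nra.
  move=> h1 h2.
  have : - ((dR d - 1) * (dR d - 1) * sqnorm (subc b) + ro2 d) / (2 * (dR d - 1)) >= - gam d.
    rewrite -hrg.
    apply: Rle_ge.
    have -> : - ((dR d - 1) * (dR d - 1) * sqnorm (subc b) + ro2 d) / (2 * (dR d - 1)) =
       - ((dR d - 1) * (dR d - 1) * sqnorm (subc b) + ro2 d) * / (2 * (dR d - 1)) by [].
    have -> : ro2 d / (dR d - 1) = (2 * ro2 d) * / (2 * (dR d - 1)) by field; lra.
    have hi : 0 < / (2 * (dR d - 1)) by apply: Rinv_0_lt_compat; lra.
    nra.
  rewrite /gam; lra.
split.
  move=> u [hb|[R [k [hR ->]]]].
    by split; [exact: Bi_Delta|exact: BiBo].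
  by split; [exact: (Gvtx_Delta hd hG hst k hR)|exact: (Gvtx_Bo hd hG hst k hR)].
split.
  move=> u v [hu|[R [k [hR ->]]]] [hv|[S [l [hS ->]]]].
  - rewrite (inner_c_sub hd (BiH _ hu) (BiH _ hv)).
    have := CS_lam (subc u) (subc v) (l := 1) ltac:(lra).
    have := hu.2; have := hv.2; lra.
  - exact: BiV.
  - rewrite inner_sym; exact: BiV.
  - have [B [hB e]] := inner_shift hG hR.
    rewrite e -mapply_mmul_f inner_sym.
    apply: vtx_Delta_ge => //.
    have [_ [_ [hmul _]]] := hG.
    exact: Gvtx_Delta (hmul _ _ hB hS).
split.
  move=> S u hS [hu|[R [k [hR ->]]]].
    left; have [e1 e2] := G_H_norm hd hG hst hS (BiH _ hu); split => //; rewrite e2; exact: hu.2.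
  right; exists (mmul S R), k; split; last by rewrite mapply_mmul_f.
  by have [_ [_ [hmul _]]] := hG; apply: hmul.
by [].
Qed.

Lemma polar_sub d (hd : (2 <= d)%nat) (G : mat d -> Prop) (hG : subgroup_O G) (hst : stochastic G)
  K u : good G K -> polar K u -> inDelta u /\ inBo u.
Proof.
move=> [_ [_ [_ hM]]] [hu hp].
have [hg [hro [hri [hgg [hlr [hrg [h1r [hal [hal2 hal3]]]]]]]]] := consts hd.
have D := dR_ge2 hd.
have hidm : G (@idm d) by have [_ [h _]] := hG.
split.
  split => // k.
  have hv : K (vtx k).
    apply: hM; right; exists (@idm d), k; split => //.
    by apply: functional_extensionality => i; rewrite mapply_idm.
  have := hp _ hv; rewrite inner_vtx hu -/(al d).
  move=> h; have : u k * (1 / dR d - al d) >= 0 by lra.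
  move=> h2; apply: Rnot_lt_le => h3; nra.
split => //.
change (sqnorm (subc u) <= ro2 d).
apply: Rnot_lt_le => hW.
set W := sqnorm (subc u) in hW.
set l := 2 * gam d / (W + ro2 d).
pose b : vec d := fun i => cvec i - l * (u i - cvec i).
have hsb : forall i, subc b i = (- l) * subc u i by move=> i; rewrite /subc /b; ring.
have hbH : inH b.
  rewrite /inH /b Rsum_sub Rsum_scal (Rsum_c hd) -/(subc u) (subc_sum hd hu); ring.
have hbB : inBi b.
  split => //.
  rewrite /sqnorm (inner_ext hsb hsb).
  have -> : inner (fun i => - l * subc u i) (fun i => - l * subc u i) = l * l * W.
    rewrite /W /sqnorm /inner -!Rsum_scal; apply: Rsum_ext => i; ring.
  have hW0 : 0 < W + ro2 d by lra.
  have -> : l * l * W = (4 * (gam d * gam d) * W) / ((W + ro2 d) * (W + ro2 d))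
    by rewrite /l; field; lra.
  rewrite hgg.
  apply: (Rmult_le_reg_r ((W + ro2 d) * (W + ro2 d))); first nra.
  have -> : 4 * (ro2 d * ri2 d) * W / ((W + ro2 d) * (W + ro2 d)) * ((W + ro2 d) * (W + ro2 d))
     = 4 * (ro2 d * ri2 d) * W by field; lra.
  have : 4 * ro2 d * W <= (W + ro2 d) * (W + ro2 d) by nra.
  nra.
have := hp _ (hM _ (or_introl hbB)).
rewrite (inner_c_sub hd hu hbH) (inner_ext (u' := subc u) (fun i => erefl) hsb).
have -> : inner (subc u) (fun i => - l * subc u i) = - l * W.
  rewrite /W /sqnorm /inner -!Rsum_scal; apply: Rsum_ext => i; ring.
have : l * W > gam d.
  have hW0 : 0 < W + ro2 d by lra.
  have -> : l * W = gam d * (2 * W / (W + ro2 d)) by rewrite /l; field; lra.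
  have : 2 * W / (W + ro2 d) > 1.
    apply: Rlt_gt; apply: (Rmult_lt_reg_r (W + ro2 d)); first lra.
    have -> : 2 * W / (W + ro2 d) * (W + ro2 d) = 2 * W by field; lra.
    lra.
  nra.
move=> h1 h2; rewrite /gam /al in h1; lra.
Qed.

Lemma Gpolar d (hd : (2 <= d)%nat) (G : mat d -> Prop) (hG : subgroup_O G) (hst : stochastic G)
  K x R : good G K -> polar K x -> G R -> polar K (mapply R x).
Proof.
move=> [_ [_ [hinv _]]] [hx hp] hR; split; first by rewrite /inH (sum_mapply hd hG hst x hR).
move=> v hv; have [B [hB e]] := inner_shift hG hR.
rewrite e; apply: hp; exact: hinv.
Qed.

Lemma extend d (hd : (2 <= d)%nat) (G : mat d -> Prop) (hG : subgroup_O G) (hst : stochastic G)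
  K : good G K ->
  (forall B, good G B -> (forall y, K y -> B y) -> forall y, B y -> K y) ->
  forall x, polar K x -> (forall T, G T -> inner x (mapply T x) >= al d) -> K x.
Proof.
move=> hK hmax x hx hT.
have [hK1 [hK2 [hK3 hK4]]] := hK.
have [_ [hidm [hmul _]]] := hG.
pose K' := fun y => K y \/ exists R, G R /\ y = mapply R x.
have gK' : good G K'.
  split.
    move=> y [hy|[R [hR ->]]]; first exact: hK1.
    exact: (polar_sub hd hG hst hK (Gpolar hd hG hst hK hx hR)).
  split.
    have mixed : forall u R, K u -> G R -> inner u (mapply R x) >= al d.
      move=> u R hu hR; rewrite inner_sym.
      have [_ hp] := Gpolar hd hG hst hK hx hR.
      exact: hp.
    move=> u v [hu|[R [hR ->]]] [hv|[S [hS ->]]].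
    - exact: hK2.
    - exact: mixed.
    - rewrite inner_sym; exact: mixed.
    - have [B [hB e]] := inner_shift hG hR.
      rewrite e -mapply_mmul_f; apply: hT; exact: hmul.
  split.
    move=> S y hS [hy|[R [hR ->]]]; first by left; exact: hK3.
    right; exists (mmul S R); split; [exact: hmul|by rewrite mapply_mmul_f].
  move=> y hy; left; exact: hK4.
apply: (hmax K' gK'); first by move=> y hy; left.
right; exists (@idm d); split => //.
by apply: functional_extensionality => i; rewrite mapply_idm.
Qed.

Lemma pow_double b m : b ^ (expn 2 m.+1) = b ^ (expn 2 m) * b ^ (expn 2 m).
Proof. by rewrite expnS mul2n -addnn -plusE pow_add. Qed.

Lemma self_dual d (hd : (2 <= d)%nat) (G : mat d -> Prop) (hG : subgroup_O G) (hst : stochastic G)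
  K : good G K ->
  (forall B, good G B -> (forall y, K y -> B y) -> forall y, B y -> K y) ->
  forall u, polar K u -> K u.
Proof.
move=> hK hmax u hpu.
have [hK1 [hK2 [hK3 hK4]]] := hK.
have [hg [hro [hri [hgg [hlr [hrg [h1r [hal [hal2 hal3]]]]]]]]] := consts hd.
have D := dR_ge2 hd.
have [hu hpu2] := hpu.
have [huD _] := polar_sub hd hG hst hK hpu.
set n := 1 / (dR d * dR d) in hal2 hrg h1r.
pose xt (t : R) : vec d := fun i => (1 - t) * cvec i + t * u i.
have F1 : forall t, 0 <= t <= 1 -> polar K (xt t).
  move=> t ht; split.
    rewrite /inH /xt Rsum_add Rsum_scal Rsum_scal (Rsum_c hd) hu; ring.
  move=> k hk; rewrite inner_lin inner_c.
  have [[_ hk1] _] := hK1 _ hk; rewrite hk1.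
  have := hpu2 _ hk; rewrite -/(al d) => h.
  have : (1 - t) * (1 / (dR d * dR d)) >= (1 - t) * al d.
    apply: Rle_ge; apply: Rmult_le_compat_l; [lra|]. rewrite -/n; lra.
  have : t * inner u k >= t * al d by apply: Rle_ge; apply: Rmult_le_compat_l; lra.
  have e : al d = 1 / (dR d * (dR d + 1)) by [].
  lra.
have F2 : forall T t i, G T -> mapply T (xt t) i = (1 - t) * cvec i + t * mapply T u i.
  move=> T t i hT; rewrite mapply_lin; have [_ hc] := hst T hT; by rewrite hc.
pose iu T := inner u (mapply T u).
have SumT : forall T, G T -> Rsum (mapply T u) = 1.
  move=> T hT; by rewrite (sum_mapply hd hG hst u hT).
have F3 : forall T t, G T -> inner (xt t) (mapply T (xt t)) = n + t * t * (iu T - n).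
  move=> T t hT.
  rewrite (inner_ext (u' := xt t) (fun i => erefl) (F2 T t ^~ hT)).
  have Sx : Rsum (xt t) = 1 by rewrite /xt Rsum_add Rsum_scal Rsum_scal (Rsum_c hd) hu; ring.
  rewrite inner_sym inner_lin inner_c Sx (inner_sym (mapply T u)) /xt inner_lin.
  rewrite inner_c (SumT T hT) -/(iu T) /n; ring.
have F4 : forall T t, G T -> inner u (mapply T (xt t)) = n + t * (iu T - n).
  move=> T t hT.
  rewrite (inner_ext (u' := u) (fun i => erefl) (F2 T t ^~ hT)).
  rewrite inner_sym inner_lin inner_c hu inner_sym -/(iu T) /n; ring.
apply: NNPP => hnK.
have [T0 [hT0 hT0a]] : exists T, G T /\ iu T < al d.
  apply: NNPP => hne; apply: hnK.
  apply: (extend hd hG hst hK hmax hpu) => T hT.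
  apply: Rnot_lt_ge => h; apply: hne; by exists T.
pose A t := 0 < t <= 1 /\ K (xt t).
have A_ineq : forall t T, A t -> G T -> n + t * (iu T - n) >= al d.
  move=> t T [ht hk] hT; rewrite -F4 //; apply: hpu2; exact: hK3.
have A_sqrt : forall t, A t -> A (sqrt t).
  move=> t [ht hk].
  have s0 : 0 < sqrt t by apply: sqrt_lt_R0; lra.
  have s1 : sqrt t <= 1 by rewrite -sqrt_1; apply: sqrt_le_1; lra.
  have ss : sqrt t * sqrt t = t by apply: sqrt_sqrt; lra.
  split; first lra.
  apply: (extend hd hG hst hK hmax (F1 (sqrt t) ltac:(lra))) => T hT.
  rewrite F3 // ss; exact: A_ineq.
set t0 := 1 / (dR d + 1).
have At0 : A t0.
  have ht0 : 0 < t0 by apply: Rdiv_lt_0_compat; lra.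
  have ht1 : t0 <= 1 by rewrite /t0; apply: (Rmult_le_reg_r (dR d + 1)); [lra|]; field_simplify; lra.
  split; first lra.
  apply: (extend hd hG hst hK hmax (F1 t0 ltac:(lra))) => T hT.
  rewrite F3 //.
  have hTu : inDelta (mapply T u) by exact: (polar_sub hd hG hst hK (Gpolar hd hG hst hK hpu hT)).1.
  have hiu : 0 <= iu T.
    apply: Rsum_ge0 => i; apply: Rmult_le_pos; [exact: huD.1|exact: hTu.1].
  have : n * (1 - t0 * t0) - al d = 1 / (dR d * (dR d + 1) * (dR d + 1)).
    by rewrite /n /t0 /al; field; lra.
  have : 0 < 1 / (dR d * (dR d + 1) * (dR d + 1)) by apply: Rdiv_lt_0_compat; nra.
  have : 0 <= t0 * t0 * iu T by apply: Rmult_le_pos; nra.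
  move=> *; nra.
set a := iu T0 - n.
have ha : a < al d - n by rewrite /a; lra.
set b := (al d - n) / a.
have ha0 : a < 0 by lra.
have hba : b * a = al d - n by rewrite /b; field; lra.
have hb0 : 0 < b.
  apply: Rnot_le_lt => h.
  have : b * a >= 0 by nra.
  lra.
have hb1 : b < 1.
  apply: Rnot_le_lt => h.
  have : b * a <= a by nra.
  lra.
have A_le : forall t, A t -> t <= b.
  move=> t At; have := A_ineq t T0 At hT0; rewrite -/a => h.
  apply: Rnot_lt_le => h2.
  have : t * a < b * a by nra.
  lra.
have Ind : forall m t, A t -> t <= b ^ (expn 2 m).
  elim=> [|m IH] t At.
    rewrite expn0 /= Rmult_1_r; exact: A_le.
  have At' := A_sqrt t At.
  have h1 := IH _ At'.
  have [hs0 _] := At'.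
  have ss : sqrt t * sqrt t = t by apply: sqrt_sqrt; have [ht _] := At; lra.
  rewrite pow_double -ss.
  apply: Rmult_le_compat; lra.
have [M hM] := pow_lt_1_zero b ltac:(rewrite Rabs_right; lra) t0 ltac:(have [] := At0; lra).
have hMle : (expn 2 M >= M)%coq_nat.
  apply/leP; apply: ltnW; exact: ltn_expl.
have := hM _ hMle.
have := Ind M t0 At0.
have hp : 0 <= b ^ (expn 2 M) by apply: pow_le; lra.
rewrite Rabs_right; lra.
Qed.

Lemma presgroup d (hd : (2 <= d)%nat) (G : mat d -> Prop) (hG : subgroup_O G) (hst : stochastic G)
  K S : good G K -> G S -> in_presgroup K S.
Proof.
move=> [hK1 [_ [hK3 _]]] hS.
have D := dR_ge2 hd.
have [hge hc] := hst S hS.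
pose r : mat d := fun i j => (S i j + 1 / dR d) / (dR d + 1).
have rsplit : forall i j, r i j = 1 / (dR d + 1) * S i j + 1 / (dR d * (dR d + 1)).
  by move=> i j; rewrite /r; field; lra.
have rowr : forall i, Rsum (fun k => r i k) = 1.
  move=> i; rewrite (Rsum_ext (rsplit i)) Rsum_add Rsum_scal (rowsum hd hst i hS) Rsum_const.
  field; lra.
exists r; split.
  split.
    move=> i j; rewrite /r; apply: Rmult_le_pos.
      have := hge i j; lra.
    apply: Rlt_le; apply: Rinv_0_lt_compat; lra.
  move=> j.
  rewrite (Rsum_ext (fun i => rsplit i j)) Rsum_add Rsum_scal (colsum hd hG hst j hS) Rsum_const.
  field; lra.
split; last first.
  move=> i j; rewrite /stretched rowr /r; field; lra.
have key : forall q : vec d, inH q -> forall i, q_r r q i = mapply S q i.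
  move=> q hq i; rewrite /q_r /mapply.
  have e : forall j, ((dR d + 1) * q j - 1 / dR d) * r i j =
     S i j * q j + (1 / dR d * q j + (- (1 / (dR d * (dR d + 1))) * S i j +
                                       - (1 / (dR d * dR d * (dR d + 1))))).
    by move=> j; rewrite /r; field; lra.
  rewrite (Rsum_ext e) !Rsum_add !Rsum_scal Rsum_const hq (rowsum hd hst i hS).
  field; lra.
move=> p; split.
  move=> [q [hq e]].
  have -> : p = mapply S q.
    apply: functional_extensionality => i; rewrite e key //; exact: (hK1 _ hq).2.1.
  exact: hK3.
move=> hp; have [B [hB [BS SB]]] := Ginv hG hS.
exists (mapply B p); split; first exact: hK3.
move=> i; rewrite key; first by rewrite SB.
exact: (hK1 _ (hK3 _ _ hB hp)).2.1.
Qed.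

Delimit Scope nat_scope with N.

Theorem mainTheorem14 (d : nat) (hd : (2 <= d)%N) (G : mat d -> Prop)
  (hG : subgroup_O G) (hst : stochastic G) :
  exists Q : vec d -> Prop, qplex Q /\ forall S, G S -> in_presgroup Q S.
Proof.
have hd' : (2 <= d)%nat by [].
pose P := fun K : vec d -> Prop => good G K \/ (forall y, ~ K y).
have [A [PA hA]] : exists A : vec d -> Prop, P A /\ (forall B, proper A B -> ~ P B).
  apply: Zorn_bigcup => F FP Ftot.
  case: (classic (exists X, F X /\ good G X)) => [[X0 [FX0 gX0]]|hno]; last first.
    right => y [X FX Xy].
    case: (FP X FX) => [gX|eX]; [by apply: hno; exists X | exact: (eX y Xy)].
  have gd : forall X y, F X -> X y -> good G X.
    move=> X y FX Xy; case: (FP X FX) => // eX; by case: (eX y Xy).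
  left; split.
    move=> y [X FX Xy]; exact: (gd X y FX Xy).1 _ Xy.
  split.
    move=> u v [X FX Xu] [Y FY Yv].
    case: (Ftot X Y FX FY) => sXY.
      have gY := gd Y v FY Yv; exact: gY.2.1 _ _ (sXY _ Xu) Yv.
    have gX := gd X u FX Xu; exact: gX.2.1 _ _ Xu (sXY _ Yv).
  split.
    move=> R y hR [X FX Xy]; exists X => //; exact: (gd X y FX Xy).2.2.1 _ _ hR Xy.
  move=> y hy; exists X0 => //; exact: gX0.2.2.2.
have gA : good G A.
  case: PA => // eA; exfalso.
  apply: (hA (M0 G)); last by left; exact: good_M0.
  split; first by move=> y /eA.
  move=> hsub; apply: (eA (@cvec d)); apply: hsub; left; split.
    exact: Rsum_c.
  have -> : sqnorm (subc (@cvec d)) = 0.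
    rewrite /sqnorm /inner /subc.
    rewrite (Rsum_ext (G := fun _ => 0)) ?Rsum_const; [ring| move=> i; ring].
  have [_ [_ [hri _]]] := consts hd'; lra.
have hmax : forall B, good G B -> (forall y, A y -> B y) -> forall y, B y -> A y.
  move=> B gB sAB; apply: NNPP => hn.
  apply: (hA B); last by left.
  by split.
exists A; split; last by move=> S hS; exact: (presgroup hd' hG hst gA hS).
split; first exact: gA.1.
move=> u; split; first exact: (self_dual hd' hG hst gA hmax).
move=> hu; split; first exact: (gA.1 _ hu).2.1.
move=> v hv; exact: gA.2.1 _ _ hu hv.
Qed.
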